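(* Let $m,n,r,d$ be integers with $m,n\ge2$, $d\ge1$, $0<r<\min\{m,n\}$, let $0\le a\le rd$, and for every list of integers $(\rho_1,\dots,\rho_r)$ with $0\le\rho_i\le d$ and $\sum_i\rho_i=a$ let $$\mathcal{A}(\rho_1,\dots,\rho_r)=\Big\{L(\lambda)R(\lambda): L\in\mathbb{C}[\lambda]^{m\times r},\ R\in\mathbb{C}[\lambda]^{r\times n},\ \deg(R_{i*})=\rho_i,\ \deg(L_{*i})=d-\rho_i\ (i=1,\dots,r)\Big\}.$$ Then, for any such list $(\rho_1,\dots,\rho_r)$: (i) if $(\sigma_1,\dots,\sigma_r)$ is any permutation of $(1,\dots,r)$, then $\mathcal{A}(\rho_1,\dots,\rho_r)=\mathcal{A}(\rho_{\sigma_1},\dots,\rho_{\sigma_r})$; (ii) if $\rho_j-\rho_k\ge2$ for some indices $j\ne k$, then $\mathcal{A}(\rho_1,\dots,\rho_r)\subseteq\overline{\mathcal{A}(\rho'_1,\dots,\rho'_r)}$, where $\rho'_j=\rho_j-1$, $\rho'_k=\rho_k+1$ and $\rho'_i=\rho_i$ for $i\ne j,k$; (iii) if $d_R=\lfloor a/r\rfloor$ and $t_R=a\bmod r$, then $\mathcal{A}(\rho_1,\dots,\rho_r)\subseteq\overline{\mathcal{A}(d_R+1,\dots,d_R+1,d_R,\dots,d_R)}$, where $d_R+1$ appears $t_R$ times and $d_R$ appears $r-t_R$ times.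
   Context: Degree of a polynomial vector: maximum degree of entries, $\deg0=-\infty$. $L_{*i}$: $i$th column; $R_{i*}$: $i$th row. Closures are taken in the space $\mathbb{C}[\lambda]^{m\times n}_d$ of complex $m\times n$ polynomial matrices of degree at most $d$, with metric $\mathrm{dist}(P,Q)=(\sum_{i=0}^d\|P_i-Q_i\|_F^2)^{1/2}$, $P_i,Q_i$ the coefficients of $\lambda^i$. *)

(* Defs.v *)
(* complex numbers C := R[i] over an arbitrary realType R
   (every realType is a complete archimedean ordered field, i.e. the reals). *)
From HB Require Import structures.
From mathcomp Require Import all_boot all_order all_algebra all_fingroup.
From mathcomp Require Import complex.
From mathcomp Require Import reals.
Set Implicit Arguments. Unset Strict Implicit. Unset Printing Implicit Defensive.
Import Order.TTheory GRing.Theory Num.Theory.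
Local Open Scope ring_scope.
Local Open Scope complex_scope.

Section PolyMx.
Variable R : realType.
Local Notation C := (R[i]).

(* deg of a polynomial vector (max of entry degrees, deg 0 = -oo) equals k,
   for k a natural number: the max of entry sizes (size = deg + 1) is k+1. *)
Definition row_deg_is p q (M : 'M[{poly C}]_(p, q)) (i : 'I_p) (k : nat) : Prop :=
  (\max_(j < q) size (M i j))%N = k.+1.
Definition col_deg_is p q (M : 'M[{poly C}]_(p, q)) (j : 'I_q) (k : nat) : Prop :=
  (\max_(i < p) size (M i j))%N = k.+1.

Definition calA (m n r d : nat) (rho : 'I_r -> nat) : 'M[{poly C}]_(m, n) -> Prop :=
  fun P => exists (L : 'M[{poly C}]_(m, r)) (Rm : 'M[{poly C}]_(r, n)),
    P = L *m Rm /\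
    forall i : 'I_r, row_deg_is Rm i (rho i) /\ col_deg_is L i (d - rho i).

Definition deg_le_mx (m n d : nat) (P : 'M[{poly C}]_(m, n)) : Prop :=
  forall i j, (size (P i j) <= d.+1)%N.

Definition normsqC (z : C) : R := (@complex.Re R z) ^+ 2 + (@complex.Im R z) ^+ 2.

Definition pdist (m n d : nat) (P Q : 'M[{poly C}]_(m, n)) : R :=
  Num.sqrt (\sum_(l < d.+1) \sum_(i < m) \sum_(j < n)
              normsqC ((P i j)`_l - (Q i j)`_l)).

Definition closure_d (m n d : nat) (S : 'M[{poly C}]_(m, n) -> Prop)
    (P : 'M[{poly C}]_(m, n)) : Prop :=
  deg_le_mx d P /\
  forall e : R, 0 < e -> exists Q, S Q /\ deg_le_mx d Q /\ pdist d P Q < e.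

End PolyMx.
Arguments calA {R} m n r d rho _.
Arguments closure_d {R} m n d S P.
Arguments deg_le_mx {R} m n d P.
Arguments pdist {R} m n d P Q.

(* Main.v *)
Require Import Defs.
From HB Require Import structures.
From mathcomp Require Import all_boot all_order all_algebra all_fingroup.
From mathcomp Require Import complex reals ring lra zify.
Import Order.TTheory GRing.Theory Num.Theory.
Set Implicit Arguments. Unset Strict Implicit. Unset Printing Implicit Defensive.
Local Open Scope ring_scope.

Lemma maxE q (h : 'I_q -> nat) s : (0 < s)%N ->
  (\max_(y < q) h y)%N = s <-> ((exists y, h y = s) /\ forall y, (h y <= s)%N).
Proof.
move=> s0; split.
- move=> hm; split; last by move=> y; rewrite -hm leq_bigmax.
  case: q h hm => [|q] h hm; first by move: hm; rewrite big_ord0 => hm; move: s0; rewrite -hm.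
  have hc : (0 < #|'I_q.+1|)%N by rewrite card_ord.
  have [y hy] := @bigop.eq_bigmax _ h hc.
  by exists y; rewrite -hm hy.
- case=> [[y hy] hle]; apply/eqP; rewrite eqn_leq; apply/andP; split.
  + by apply/bigmax_leqP => i _; exact: hle.
  + by rewrite -hy leq_bigmax.
Qed.

Lemma sum2 (T : Type) (idx : T) (op : Monoid.com_law idx) r (F : 'I_r -> T) (j k : 'I_r) :
  j != k -> \big[op/idx]_i F i = op (F j) (op (F k) (\big[op/idx]_(i | (i != j) && (i != k)) F i)).
Proof.
move=> hjk; rewrite (bigD1 j) //=; congr (op _ _).
by rewrite (bigD1 k) //= eq_sym.
Qed.

Section Cl.
Variable R : realType.
Local Notation C := (R[i]).

Definition sumD m n d (P Q : 'M[{poly C}]_(m, n)) : R :=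
  \sum_(l < d.+1) \sum_(i < m) \sum_(j < n) normsqC ((P i j)`_l - (Q i j)`_l).

Lemma normsqC_ge0 (z : C) : 0 <= normsqC z.
Proof. by rewrite /normsqC addr_ge0 // sqr_ge0. Qed.

Lemma sumD_ge0 m n d (P Q : 'M[{poly C}]_(m, n)) : 0 <= sumD d P Q.
Proof. by apply: sumr_ge0 => l _; apply: sumr_ge0 => i _; apply: sumr_ge0 => j _; exact: normsqC_ge0. Qed.

Lemma normsq_tri (x y z : C) : normsqC (x - z) <= 2 * normsqC (x - y) + 2 * normsqC (y - z).
Proof. case: x => a b; case: y => c e; case: z => f g; rewrite /normsqC /=.
have h1 := sqr_ge0 (a - 2 * c + f). have h2 := sqr_ge0 (b - 2 * e + g). nra. Qed.

Lemma sumD_tri m n d (P Q S : 'M[{poly C}]_(m, n)) :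
  sumD d P S <= 2 * sumD d P Q + 2 * sumD d Q S.
Proof.
rewrite /sumD !mulr_sumr -big_split /=; apply: ler_sum => l _.
rewrite !mulr_sumr -big_split /=; apply: ler_sum => i _.
rewrite !mulr_sumr -big_split /=; apply: ler_sum => j _.
exact: normsq_tri.
Qed.

Lemma sqrt_lt (s e : R) : 0 < e -> (Num.sqrt s < e) = (s < e ^+ 2).
Proof.
move=> e0; by rewrite -{1}(gtr0_norm e0) -sqrtr_sqr ltr_sqrt ?exprn_gt0.
Qed.

Lemma pdistE m n d (P Q : 'M[{poly C}]_(m, n)) : pdist _ _ d P Q = Num.sqrt (sumD d P Q).
Proof. by []. Qed.

Lemma cl_self m n d (S : 'M[{poly C}]_(m, n) -> Prop) P :
  deg_le_mx _ _ d P -> S P -> closure_d _ _ d S P.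
Proof.
move=> hP hS; split => // e e0; exists P; split => //; split => //.
rewrite pdistE sqrt_lt //; rewrite /sumD.
rewrite big1 ?exprn_gt0 // => l _; rewrite big1 // => i _; rewrite big1 // => j _.
by rewrite subrr /normsqC /= expr0n /= addr0.
Qed.

Lemma cl_trans m n d (S T : 'M[{poly C}]_(m, n) -> Prop) P :
  (forall Q, S Q -> closure_d _ _ d T Q) -> closure_d _ _ d S P -> closure_d _ _ d T P.
Proof.
move=> hST [hP hS]; split => // e e0.
have e20 : 0 < e / 2 by rewrite divr_gt0.
have [Q [SQ [dQ hPQ]]] := hS _ e20.
have [_ hT] := hST Q SQ.
have [U [TU [dU hQU]]] := hT _ e20.
exists U; split => //; split => //.
move: hPQ hQU; rewrite !pdistE !sqrt_lt // => h1 h2.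
apply: le_lt_trans (sumD_tri d P Q U) _.
have -> : e ^+ 2 = 2 * (e / 2) ^+ 2 + 2 * (e / 2) ^+ 2 by field.
by rewrite ltrD // ltr_pM2l.
Qed.
End Cl.

Section PermS.
Variable R : realType.
Local Notation C := (R[i]).

Lemma calA_ext m n r d (rho rho' : 'I_r -> nat) (P : 'M[{poly C}]_(m, n)) :
  (forall i, rho i = rho' i) -> calA m n r d rho P -> calA m n r d rho' P.
Proof.
move=> he [L [Rm [-> h]]]; exists L, Rm; split => // i; rewrite -he; exact: h.
Qed.

Lemma calA_perm m n r d (rho : 'I_r -> nat) (s : 'S_r) (P : 'M[{poly C}]_(m, n)) :
  calA m n r d rho P -> calA m n r d (fun i => rho (s i)) P.
Proof.
move=> [L [Rm [-> h]]].
exists (\matrix_(x, i) L x (s i)), (\matrix_(i, y) Rm (s i) y); split.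
  apply/matrixP => x y; rewrite !mxE (reindex_inj (@perm_inj _ s)) /=.
  by apply: eq_bigr => i _; rewrite !mxE.
move=> i; have [h1 h2] := h (s i); split.
  by rewrite /row_deg_is -h1; apply: eq_bigr => y _; rewrite mxE.
by rewrite /col_deg_is -h2; apply: eq_bigr => y _; rewrite mxE.
Qed.

Lemma part_i m n r d (rho : 'I_r -> nat) (s : 'S_r) (P : 'M[{poly C}]_(m, n)) :
  calA m n r d rho P <-> calA m n r d (fun i => rho (s i)) P.
Proof.
split; first exact: calA_perm.
move=> h; have := calA_perm (s^-1)%g h; apply: calA_ext => i.
by rewrite permKV.
Qed.
End PermS.

Section PartII.
Variable R : realType.
Local Notation C := (R[i]).
Local Open Scope complex_scope.

Lemma key_id (a b c q e p eps u rest rj lk : {poly C}) :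
  eps * u = 1 -> rj = c + q * 'X -> lk = e + p * 'X ->
  ('X * a + eps * e) * (q + u * b) + ((p - u * a) * ('X * b - eps * c) + rest)
  = a * rj + (lk * b + rest) + eps * (e * q - p * c).
Proof.
move=> H -> ->.
have -> : ('X*a + eps*e)*(q + u*b) + ((p - u*a)*('X*b - eps*c) + rest) = a*(c + q*'X) + ((e + p*'X)*b + rest) + eps*(e*q - p*c) + (eps*u - 1)*(e*b+a*c) by ring.
by rewrite H subrr mul0r addr0.
Qed.

Lemma max_add q (f g : 'I_q -> {poly C}) s : (0 < s)%N ->
  (\max_(y < q) size (f y))%N = s -> (forall y, (size (g y) < s)%N) ->
  (\max_(y < q) size ((f y + g y)%R))%N = s.
Proof.
move=> s0 /(maxE _ s0) [[y0 hy0] hle] hg; apply/maxE => //; split.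
  by exists y0; rewrite size_polyDl // hy0.
move=> y; apply: leq_trans (size_polyD _ _) _; rewrite geq_max hle /=; exact: ltnW.
Qed.

Lemma max_mulX q (f : 'I_q -> {poly C}) s : (0 < s)%N ->
  (\max_(y < q) size (f y))%N = s -> (\max_(y < q) size (('X * f y)%R))%N = s.+1.
Proof.
move=> s0 /(maxE _ s0) [[y0 hy0] hle]; apply/maxE => //; split.
  exists y0; rewrite mulrC size_mulX ?hy0 // -size_poly_eq0 hy0; by case: s s0 {hy0 hle}.
move=> y; case: (eqVneq (f y) 0) => [->|hf]; first by rewrite mulr0 size_poly0.
by rewrite mulrC size_mulX // ltnS hle.
Qed.

Lemma max_drop q (f : 'I_q -> {poly C}) s : (0 < s)%N ->
  (\max_(y < q) size (f y))%N = s.+1 -> (\max_(y < q) size (drop_poly 1 (f y)))%N = s.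
Proof.
move=> s0 /(maxE _ (ltn0Sn s)) [[y0 hy0] hle]; apply/maxE => //; split.
  by exists y0; rewrite size_drop_poly hy0 subn1.
by move=> y; rewrite size_drop_poly; have := hle y; lia.
Qed.

Lemma sizeCM (c : C) (p : {poly C}) : (size ((c%:P * p)%R) <= size p)%N.
Proof. by rewrite mul_polyC size_scale_leq. Qed.

Lemma nsq_lem (dl : R) (z : C) : normsqC (- ((dl%:C) * z)) = dl ^+ 2 * normsqC z.
Proof. case: z => x y; rewrite /normsqC /=; ring. Qed.

End PartII.

Lemma pred_add_le (a b A B c : nat) : (a <= A)%N -> (b <= B)%N -> ((A + B).-1 <= c)%N -> ((a + b).-1 <= c)%N.
Proof. lia. Qed.

Section PartII2.
Variable R : realType.
Local Notation C := (R[i]).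
Local Open Scope complex_scope.

Lemma size_drop_le (p : {poly C}) : (size (drop_poly 1 p) <= size p)%N.
Proof. by rewrite size_drop_poly leq_subr. Qed.

Lemma degP m n r d (rho : 'I_r -> nat) (hrho : forall i, (rho i <= d)%N)
  (L : 'M[{poly C}]_(m, r)) (Rm : 'M[{poly C}]_(r, n)) :
  (forall i, row_deg_is Rm i (rho i) /\ col_deg_is L i (d - rho i)) ->
  forall x y, (size ((L *m Rm) x y) <= d.+1)%N.
Proof.
move=> h x y; rewrite mxE.
apply: (big_ind (fun p : {poly C} => (size p <= d.+1)%N)).
- by rewrite size_poly0.
- by move=> p1 p2 h1 h2; apply: leq_trans (size_polyD _ _) _; rewrite geq_max h1 h2.
move=> i _; apply: leq_trans (size_polyMleq _ _) _.
have [h1 h2] := h i.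
have s1 : (size (L x i) <= (d - rho i).+1)%N by rewrite -h2 (@leq_bigmax _ (fun x => size (L x i)) x).
have s2 : (size (Rm i y) <= (rho i).+1)%N by rewrite -h1 (@leq_bigmax _ (fun y => size (Rm i y)) y).
apply: (pred_add_le s1 s2); have := hrho i; lia.
Qed.

Lemma part_ii m n r d (rho : 'I_r -> nat) (hrho : forall i, (rho i <= d)%N)
  (j k : 'I_r) (hjk : j != k) (hgap : (rho k + 2 <= rho j)%N)
  (P : 'M[{poly C}]_(m, n)) :
  calA m n r d rho P ->
  closure_d m n d (calA m n r d
         (fun i => if i == j then (rho j - 1)%N
                   else if i == k then (rho k + 1)%N else rho i)) P.
Proof.
move=> [L [Rm [-> hdeg]]].
have hsL : forall x i, (size (L x i) <= (d - rho i).+1)%N.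
  by move=> x i; have [_ h2] := hdeg i; rewrite -h2 (@leq_bigmax _ (fun x => size (L x i)) x).
have hsR : forall i y, (size (Rm i y) <= (rho i).+1)%N.
  by move=> i y; have [h1 _] := hdeg i; rewrite -h1 (@leq_bigmax _ (fun y => size (Rm i y)) y).
have hj := hrho j.
split; first exact: degP.
move=> e e0.
pose E := \matrix_(x, y) (take_poly 1 (L x k) * drop_poly 1 (Rm j y)
                          - drop_poly 1 (L x k) * take_poly 1 (Rm j y)) : 'M[{poly C}]_(m, n).
pose K := \sum_(l < d.+1) \sum_(x < m) \sum_(y < n) normsqC ((E x y)`_l).
have K0 : 0 <= K.
  by apply: sumr_ge0 => l _; apply: sumr_ge0 => i _; apply: sumr_ge0 => y _; exact: normsqC_ge0.
pose dl := e / (K + 1).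
have dl0 : 0 < dl by rewrite divr_gt0 // ltr_wpDl.
have hdl : dl * (K + 1) = e by rewrite /dl mulfVK // gt_eqF // ltr_wpDl.
pose eps : C := dl%:C.
have eps0 : eps != 0 by rewrite /eps fmorph_eq0 gt_eqF.
pose u : C := eps^-1.
have heu : eps%:P * u%:P = 1 by rewrite -polyCM /u mulfV.
pose L' := \matrix_(x, i) (if i == j then 'X * L x j + eps%:P * take_poly 1 (L x k)
                          else if i == k then drop_poly 1 (L x k) - u%:P * L x j
                          else L x i) : 'M[{poly C}]_(m, r).
pose R' := \matrix_(i, y) (if i == j then drop_poly 1 (Rm j y) + u%:P * Rm k y
                          else if i == k then 'X * Rm k y - eps%:P * take_poly 1 (Rm j y)
                          else Rm i y) : 'M[{poly C}]_(r, n).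
have hkj : (k == j) = false by rewrite eq_sym (negbTE hjk).
have Hent : forall x y, (L' *m R') x y = (L *m Rm) x y + eps%:P * E x y.
  move=> x y; rewrite !mxE (sum2 _ _ hjk) [in RHS](sum2 _ _ hjk).
  rewrite !mxE eqxx hkj eqxx.
  have -> : \sum_(i | (i != j) && (i != k)) L' x i * R' i y
          = \sum_(i | (i != j) && (i != k)) L x i * Rm i y.
    by apply: eq_bigr => i /andP[h1 h2]; rewrite !mxE (negbTE h1) (negbTE h2).
  apply: key_id => //.
    by rewrite -{1}(poly_take_drop 1 (Rm j y)) expr1.
  by rewrite -{1}(poly_take_drop 1 (L x k)) expr1.
exists (L' *m R'); split; last split.
- exists L', R'; split => // i; cbv beta.
  case: (eqVneq i j) => [->|hij].
    split.
      rewrite /row_deg_is; under eq_bigr => y _ do rewrite mxE eqxx.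
      have -> : (rho j - 1).+1 = rho j by lia.
      apply: max_add; first by lia.
        by apply: max_drop; [lia | have [h1 _] := hdeg j; exact: h1].
      move=> y; apply: leq_ltn_trans (sizeCM _ _) _; apply: leq_ltn_trans (hsR k y) _; lia.
    rewrite /col_deg_is; under eq_bigr => x _ do rewrite mxE eqxx.
    have -> : (d - (rho j - 1)).+1 = (d - rho j).+2 by lia.
    apply: max_add => //.
      by apply: max_mulX => //; have [_ h2] := hdeg j; exact: h2.
    move=> x; apply: leq_ltn_trans (sizeCM _ _) _; apply: leq_ltn_trans (size_take_poly _ _) _; lia.
  case: (eqVneq i k) => [->|hik].
    split.
      rewrite /row_deg_is; under eq_bigr => y _ do rewrite mxE hkj eqxx.
      rewrite addn1; apply: max_add => //.
        by apply: max_mulX => //; have [h1 _] := hdeg k; exact: h1.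
      move=> y; rewrite size_polyN; apply: leq_ltn_trans (sizeCM _ _) _.
      apply: leq_ltn_trans (size_take_poly _ _) _; lia.
    rewrite /col_deg_is; under eq_bigr => x _ do rewrite mxE hkj eqxx.
    have -> : (d - (rho k + 1)).+1 = (d - rho k)%N by lia.
    apply: max_add; first by lia.
      apply: max_drop; first by lia.
      have -> : (d - rho k)%N = (d - rho k - 1).+1 by lia.
      by have [_ h2] := hdeg k; rewrite h2; congr S; lia.
    move=> x; rewrite size_polyN; apply: leq_ltn_trans (sizeCM _ _) _.
    apply: leq_ltn_trans (hsL x j) _; lia.
  have [h1 h2] := hdeg i; split.
    by rewrite /row_deg_is -h1; apply: eq_bigr => y _; rewrite mxE (negbTE hij) (negbTE hik).
  by rewrite /col_deg_is -h2; apply: eq_bigr => x _; rewrite mxE (negbTE hij) (negbTE hik).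
- move=> x y; rewrite Hent; apply: leq_trans (size_polyD _ _) _.
  rewrite geq_max (degP hrho hdeg) /=; apply: leq_trans (sizeCM _ _) _.
  rewrite mxE; apply: leq_trans (size_polyD _ _) _; rewrite size_polyN geq_max.
  apply/andP; split; apply: leq_trans (size_polyMleq _ _) _.
    apply: (pred_add_le (size_take_poly 1 _) (leq_trans (size_drop_le _) (hsR j y))); lia.
  apply: (pred_add_le (leq_trans (size_drop_le _) (hsL x k)) (size_take_poly 1 _)); lia.
- rewrite pdistE sqrt_lt //.
  have -> : sumD d (L *m Rm) (L' *m R') = dl ^+ 2 * K.
    rewrite /sumD /K mulr_sumr; apply: eq_bigr => l _.
    rewrite mulr_sumr; apply: eq_bigr => x _.
    rewrite mulr_sumr; apply: eq_bigr => y _.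
    by rewrite Hent coefD coefCM opprD addrA subrr add0r nsq_lem.
  rewrite -hdl; nra.
Qed.
End PartII2.

Lemma sum_change r (F G : 'I_r -> nat) (j k : 'I_r) : j != k ->
  (forall i, i != j -> i != k -> F i = G i) ->
  (\sum_(i < r) F i + G j + G k = \sum_(i < r) G i + F j + F k)%N.
Proof.
move=> hjk h; rewrite (bigD1 j) //= (bigD1 k) 1?eq_sym //= [in RHS](bigD1 j) //= [in RHS](bigD1 k) 1?eq_sym //=.
rewrite [in LHS](eq_bigr G); last by move=> i /andP[h1 h2]; exact: h.
lia.
Qed.

Lemma count_lt r t : (\sum_(i < r) (i < t : nat))%N = minn r t.
Proof.
elim: r => [|r IH]; first by rewrite big_ord0 min0n.
rewrite big_ord_recr /= IH; case: (ltnP r t) => h /=; lia.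
Qed.

Lemma W_bound r d (rho : 'I_r -> nat) : (forall i, rho i <= d)%N ->
  (\sum_(i < r) i * rho i <= r * r * d)%N.
Proof.
move=> h; apply: leq_trans (_ : \sum_(i < r) (r * d) <= _)%N.
  by apply: leq_sum => i _; apply: leq_mul; [exact: ltnW | exact: h].
by rewrite sum_nat_const card_ord mulnA.
Qed.

Section PartIII.
Variable R : realType.
Local Notation C := (R[i]).

Definition S2 r (rho : 'I_r -> nat) := (\sum_(i < r) rho i * rho i)%N.
Definition W r (rho : 'I_r -> nat) := (\sum_(i < r) i * rho i)%N.

Lemma reach m n r d a (hr0 : (0 < r)%N) : forall N (rho : 'I_r -> nat),
  (S2 rho * (r * r * d).+1 + W rho < N)%N ->
  (forall i, rho i <= d)%N -> (\sum_(i < r) rho i)%N = a ->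
  forall P : 'M[{poly C}]_(m, n), calA m n r d rho P ->
     closure_d m n d (calA m n r d
       (fun i : 'I_r => if (i < a %% r)%N then (a %/ r).+1%N else (a %/ r)%N)) P.
Proof.
set B := (r * r * d).+1.
elim=> [|N IH] rho hmu hrho hsum P hP; first by [].
case: (boolP [exists j, exists k, (j != k) && (rho k + 2 <= rho j)%N]).
  case/existsP=> j /existsP [k /andP [hjk hgap]].
  pose rho' := fun i => if i == j then (rho j - 1)%N
                   else if i == k then (rho k + 1)%N else rho i.
  have hkj : (k == j) = false by rewrite eq_sym (negbTE hjk).
  have e1 : rho' j = (rho j - 1)%N by rewrite /rho' eqxx.
  have e2 : rho' k = (rho k + 1)%N by rewrite /rho' hkj eqxx.
  have eo : forall i, i != j -> i != k -> rho' i = rho i.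
    by move=> i h1 h2; rewrite /rho' (negbTE h1) (negbTE h2).
  apply: cl_trans (part_ii hrho hjk hgap hP) => Q hQ.
  have hb' : forall i, (rho' i <= d)%N.
    move=> i; rewrite /rho'; case: (i == j); first by have := hrho j; lia.
    case: (i == k); last exact: hrho.
    by have := hrho j; lia.
  apply: (IH rho') => //; last first.
    have := sum_change hjk eo; rewrite e1 e2; lia.
  have hS : (S2 rho' + rho j * rho j + rho k * rho k = S2 rho + rho' j * rho' j + rho' k * rho' k)%N.
    by apply: sum_change hjk _ => i h1 h2; rewrite eo.
  rewrite e1 e2 in hS.
  have hS2 : (S2 rho' + 1 <= S2 rho)%N by nia.
  have hW : (W rho' < B)%N by rewrite /B ltnS; exact: W_bound.
  have := leq_mul hS2 (leqnn B); move: hmu; rewrite -/B; nia.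
rewrite negb_exists => /forallP hA.
have hA' : forall j k, j != k -> (rho j < rho k + 2)%N.
  move=> j k hjk; have := hA j; rewrite negb_exists => /forallP /(_ k).
  by rewrite negb_and hjk /= -ltnNge.
case: (boolP [exists i : 'I_r, exists i' : 'I_r, (i < i')%N && (rho i < rho i')%N]).
  case/existsP=> i /existsP [i' /andP [hii' hrr]].
  have hne : i != i' by apply/eqP => e; move: hii'; rewrite e ltnn.
  pose s := tperm i i'.
  have hP2 := calA_perm s hP.
  pose rho2 := fun x => rho (s x).
  have e1 : rho2 i = rho i' by rewrite /rho2 /s tpermL.
  have e2 : rho2 i' = rho i by rewrite /rho2 /s tpermR.
  have eo : forall x, x != i -> x != i' -> rho2 x = rho x.
    by move=> x h1 h2; rewrite /rho2 /s tpermD // eq_sym.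
  apply: (IH rho2) => //.
  - have hS : (S2 rho2 + rho i * rho i + rho i' * rho i' = S2 rho + rho2 i * rho2 i + rho2 i' * rho2 i')%N.
      by apply: sum_change hne _ => x h1 h2; rewrite eo.
    have hW : (W rho2 + i * rho i + i' * rho i' = W rho + i * rho2 i + i' * rho2 i')%N.
      by apply: sum_change hne _ => x h1 h2; rewrite eo.
    rewrite e1 e2 in hS hW.
    have hlt : (i * rho i' + i' * rho i < i * rho i + i' * rho i')%N by nia.
    move: hmu; rewrite -/B; nia.
  - by move=> x; exact: hrho.
  - have := sum_change hne eo; rewrite e1 e2; lia.
rewrite negb_exists => /forallP hB.
have hB' : forall i i' : 'I_r, (i < i')%N -> (rho i' <= rho i)%N.
  move=> i i' hii'; have := hB i; rewrite negb_exists => /forallP /(_ i').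
  by rewrite negb_and hii' /= -leqNgt.
have [L [Rm [hPe hdeg]]] := hP.
apply: cl_self.
  by rewrite hPe; move=> x y; exact: (degP hrho hdeg).
apply: calA_ext hP => i.
have hlast : (r.-1 < r)%N by rewrite ltn_predL.
pose last := Ordinal hlast.
pose c := rho last.
have hlo : forall i, (c <= rho i)%N.
  move=> x; case: (ltnP x last) => hx; first exact: hB'.
  have -> : x = last by apply/val_inj => /=; have := ltn_ord x; rewrite /= in hx; lia.
  by [].
have hhi : forall i, (rho i <= c.+1)%N.
  move=> x; case: (eqVneq x last) => [->|hx]; first exact: leqnSn.
  by have := hA' _ _ hx; rewrite /c; lia.
have hex : exists t, [exists i : 'I_r, (val i == t) && (rho i == c)].
  by exists r.-1; apply/existsP; exists last; rewrite /= !eqxx.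
case: (ex_minnP hex) => t /existsP [i0 /andP [/eqP hi0 /eqP hc0]] hmin.
have hval : forall x : 'I_r, rho x = (c + (x < t : nat))%N.
  move=> x; case: (ltnP x t) => hx.
    have : rho x != c.
      apply/eqP => hxc; have := hmin x; rewrite ltnNge in hx.
      have hxe : [exists i1 : 'I_r, (val i1 == x) && (rho i1 == c)].
        by apply/existsP; exists x; rewrite eqxx hxc eqxx.
      by move/(_ hxe) => h; move: hx; rewrite h.
    by have := hlo x; have := hhi x; rewrite addn1; move=> *; lia.
  case: (eqVneq x i0) => [->|hx0]; first by rewrite hc0 addn0.
  have hi0' : nat_of_ord i0 = t := hi0.
  have : (i0 < x)%N.
    rewrite ltn_neqAle hi0' hx andbT -hi0'; apply: contra hx0 => /eqP e; apply/eqP/val_inj => /=; by rewrite e.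
  move/hB' => h; have := hlo x; rewrite -hc0 in h *; lia.
have ht : (t < r)%N by rewrite -hi0 ltn_ord.
have ha : a = (c * r + t)%N.
  rewrite -hsum (eq_bigr _ (fun x _ => hval x)) big_split /= count_lt sum_nat_const card_ord.
  have -> : minn r t = t by apply/minn_idPr; exact: ltnW.
  by rewrite mulnC.
have hq : (a %/ r)%N = c by rewrite ha divnMDl // divn_small // addn0.
have hm : (a %% r)%N = t by rewrite ha modnMDl modn_small.
rewrite hq hm hval; case: (i < t)%N => /=; lia.
Qed.
End PartIII.

Theorem theorem4p5 (R : realType) (m n r d a : nat)
  (hm : (2 <= m)%N) (hn : (2 <= n)%N) (hd : (1 <= d)%N)
  (hr0 : (0 < r)%N) (hr : (r < minn m n)%N) (ha : (a <= r * d)%N)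
  (rho : 'I_r -> nat) (hrho : forall i, (rho i <= d)%N)
  (hsum : (\sum_(i < r) rho i)%N = a) :
  (* (i) *)
  (forall s : 'S_r,
     forall P, calA (R := R) m n r d rho P <-> calA (R := R) m n r d (fun i => rho (s i)) P) /\
  (* (ii) *)
  (forall j k : 'I_r, j != k -> (rho k + 2 <= rho j)%N ->
     forall P, calA (R := R) m n r d rho P ->
       closure_d m n d (calA (R := R) m n r d
         (fun i => if i == j then (rho j - 1)%N
                   else if i == k then (rho k + 1)%N else rho i)) P) /\
  (* (iii) *)
  (forall P, calA (R := R) m n r d rho P ->
     closure_d m n d (calA (R := R) m n r d
       (fun i : 'I_r => if (i < a %% r)%N then (a %/ r).+1%N else (a %/ r)%N)) P).
Proof.
split; first by move=> s P; exact: part_i.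
split; first by move=> j k hjk hgap P hP; exact: part_ii.
move=> P hP.
exact: (@reach R m n r d a hr0 (S2 rho * (r * r * d).+1 + W rho).+1 rho (ltnSn _) hrho hsum P hP).
Qed.
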